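(* Let $p$ be a prime and $N(x)=1+x+\dots+x^{p-1}$. Let $\mathfrak{K}$ be the $\mathbb{Z}/2$-graded ring generated by $u_0,u_1,u_2$ and $\alpha_{jk}$ for $j,k\in\{0,1,2\}$, $j\neq k$, subject to the relations $u_ju_k=\delta_{j,k}u_j$; $u_0+u_1+u_2=1$; $u_j\alpha_{jk}u_k=\alpha_{jk}$; $\alpha_{jk}\alpha_{km}=0$ whenever $\{j,k,m\}=\{0,1,2\}$; $\alpha_{01}\alpha_{10}=N(u_0-\alpha_{02}\alpha_{20})$; $\alpha_{10}\alpha_{01}=N(u_1-\alpha_{12}\alpha_{21})$; $p\,u_2=N(u_2-\alpha_{20}\alpha_{02})+N(u_2-\alpha_{21}\alpha_{12})$; where $\alpha_{12},\alpha_{21}$ are odd and all other generators even (polynomials $N(x)$ in an element $x$ of the corner $u_j\mathfrak{K}u_j$ are formed with $u_j$ as unit). Then there is a unique ring anti-automorphism $x\mapsto x^*$ of $\mathfrak{K}$ with $u_j^*=u_j$ and $\alpha_{jk}^*=\alpha_{kj}$ for all $j,k\in\{0,1,2\}$ with $j\neq k$. It is grading-preserving and involutive.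
   Context: The ring $\mathfrak{K}$ so presented is (by a result of the paper) isomorphic to Köhler's ring $\mathrm{KK}^G_*(B,B)^{\mathrm{op}}$ for $G=\mathbb{Z}/p$ and $B=\mathbb{C}\oplus\mathrm{C}(G)\oplus D$, $D$ the mapping cone of the unit map $\mathbb{C}\to\mathrm{C}(G)$; the statement concerns the ring with the presentation given. *)

(* Defs.v *)
From HB Require Import structures.
From mathcomp Require Import all_boot all_order all_algebra.
Set Implicit Arguments. Unset Strict Implicit. Unset Printing Implicit Defensive.
Import Order.TTheory GRing.Theory.
Local Open Scope ring_scope.

Definition i0 : 'I_3 := @Ordinal 3 0 isT.
Definition i1 : 'I_3 := @Ordinal 3 1 isT.
Definition i2 : 'I_3 := @Ordinal 3 2 isT.

(* N(x) = 1 + x + ... + x^(p-1), formed in the corner ring with unit e. *)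
Definition Ncorner (R : pzRingType) (p : nat) (e x : R) : R :=
  e + \sum_(1 <= i < p) x ^+ i.

(* The defining relations of the ring K, for elements u_j and alpha_jk
   (only the alpha_jk with j != k are generators; diagonal values are ignored). *)
Definition K_relations (R : pzRingType) (p : nat)
    (u : 'I_3 -> R) (a : 'I_3 -> 'I_3 -> R) : Prop :=
  [/\ (forall j k, u j * u k = if j == k then u j else 0),
      u i0 + u i1 + u i2 = 1,
      (forall j k, j != k -> u j * a j k * u k = a j k)
    & (forall j k m, j != k -> k != m -> j != m -> a j k * a k m = 0)] /\
  [/\ a i0 i1 * a i1 i0 = Ncorner p (u i0) (u i0 - a i0 i2 * a i2 i0),
      a i1 i0 * a i0 i1 = Ncorner p (u i1) (u i1 - a i1 i2 * a i2 i1)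
    & p%:R * u i2 = Ncorner p (u i2) (u i2 - a i2 i0 * a i0 i2)
                    + Ncorner p (u i2) (u i2 - a i2 i1 * a i1 i2)].

Definition ring_hom (R S : pzRingType) (f : R -> S) : Prop :=
  [/\ forall x y, f (x + y) = f x + f y,
      forall x y, f (x * y) = f x * f y
    & f 1 = 1].

Definition ring_antiauto (R : pzRingType) (f : R -> R) : Prop :=
  [/\ forall x y, f (x + y) = f x + f y,
      forall x y, f (x * y) = f y * f x,
      f 1 = 1
    & bijective f].

(* (K, u, a) is the ring presented by the generators u_j, alpha_jk and the
   relations K_relations: the initial ring among rings equipped with
   elements satisfying the relations (universal property). *)
Definition is_K_presentation (p : nat) (K : pzRingType)
    (u : 'I_3 -> K) (a : 'I_3 -> 'I_3 -> K) : Prop :=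
  K_relations p u a /\
  forall (R : pzRingType) (v : 'I_3 -> R) (b : 'I_3 -> 'I_3 -> R),
    K_relations p v b ->
    (exists f : K -> R, ring_hom f /\ (forall j, f (u j) = v j) /\
        (forall j k, j != k -> f (a j k) = b j k)) /\
    (forall f g : K -> R, ring_hom f -> ring_hom g ->
        (forall j, f (u j) = v j) -> (forall j, g (u j) = v j) ->
        (forall j k, j != k -> f (a j k) = b j k) ->
        (forall j k, j != k -> g (a j k) = b j k) ->
        f =1 g).

Definition alpha_parity (j k : 'I_3) : bool :=
  ((j == i1) && (k == i2)) || ((j == i2) && (k == i1)).

(* homog u a d x : x lies in the degree-d part of the Z/2-grading of K
   determined by the parities of the generators, i.e. the additive span of
   monomials in the generators of total parity d. *)
Inductive homog (K : pzRingType) (u : 'I_3 -> K) (a : 'I_3 -> 'I_3 -> K)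
  : bool -> K -> Prop :=
| homog_u j : homog u a false (u j)
| homog_a j k : j != k -> homog u a (alpha_parity j k) (a j k)
| homog_1 : homog u a false 1
| homog_0 d : homog u a d 0
| homog_add d x y : homog u a d x -> homog u a d y -> homog u a d (x + y)
| homog_opp d x : homog u a d x -> homog u a d (- x)
| homog_mul d e x y : homog u a d x -> homog u a e y -> homog u a (addb d e) (x * y).

(* Main.v *)
Require Import Defs.
From HB Require Import structures.
From mathcomp Require Import all_boot all_order all_algebra.
Import GRing.Theory.
Local Open Scope ring_scope.

Lemma exprc_eq (K : pzRingType) (x : K) (n : nat) :
  @GRing.exp (K^c) x n = @GRing.exp K x n.
Proof.
elim: n => [|n IH]; first by [].
by rewrite exprS IH [in RHS]exprSr.
Qed.

Lemma Ncorner_c (K : pzRingType) p (e x : K) :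
  @Ncorner (K^c) p e x = @Ncorner K p e x.
Proof.
rewrite /Ncorner; congr (_ + _); apply: eq_bigr => i _; exact: exprc_eq.
Qed.

Lemma rel_c p (K : pzRingType) (u : 'I_3 -> K) (a : 'I_3 -> 'I_3 -> K) :
  K_relations p u a -> @K_relations (K^c) p u (fun j k => a k j).
Proof.
move=> [[H1 H2 H3 H4] [H5 H6 H7]]; split; split.
- move=> j k; change (u k * u j = if j == k then u j else 0); rewrite (H1 k j) eq_sym; by case: eqP => // ->.
- exact: H2.
- move=> j k jk; change (u k * (a k j * u j) = a k j); rewrite mulrA; apply: H3; by rewrite eq_sym.
- move=> j k m jk km jm; change (a m k * a k j = 0); apply: H4; by rewrite eq_sym.
- rewrite Ncorner_c /=; exact: H5.
- rewrite Ncorner_c /=; exact: H6.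
- rewrite !Ncorner_c /= -H7.
  have -> : @GRing.mul (K^c) (p%:R) (u i2) = u i2 * (p%:R : K) by [].
  by rewrite mulr_natr mulr_natl.
Qed.

Lemma antihom0 (K : pzRingType) (f : K -> K) :
  (forall x y, f (x + y) = f x + f y) -> f 0 = 0.
Proof.
move=> H; have := H 0 0; rewrite addr0 => e.
by apply: (@addrI _ (f 0)); rewrite addr0 -e.
Qed.

Theorem proposition5p11 (p : nat) (hp : prime p) (K : pzRingType)
    (u : 'I_3 -> K) (a : 'I_3 -> 'I_3 -> K)
    (HK : is_K_presentation p u a) :
  exists f : K -> K,
    [/\ ring_antiauto f,
        (forall j, f (u j) = u j)
      & (forall j k, j != k -> f (a j k) = a k j)] /\
    [/\ (forall g : K -> K, ring_antiauto g ->
           (forall j, g (u j) = u j) ->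
           (forall j k, j != k -> g (a j k) = a k j) -> g =1 f),
        (forall d x, homog u a d x -> homog u a d (f x))
      & (forall x, f (f x) = x)].
Proof.
case: HK => Hrel Huniv.
have [[f0' [fh [fu0 fa0]]] funiq] := Huniv (K^c) u (fun j k => a k j) (@rel_c p K u a Hrel).
have [fD0 fM0 f10] := fh.
pose f : K -> K := f0'.
have fD : forall x y, f (x + y) = f x + f y := fD0.
have fM' : forall x y : K, f (x * y) = f y * f x := fM0.
have f1 : f 1 = 1 := f10.
have fu : forall j, f (u j) = u j := fu0.
have fa : forall j k, j != k -> f (a j k) = a k j := fa0.
have [_ idu] := Huniv K u a Hrel.
have ff : forall x, f (f x) = x.
  move=> x; apply: (idu (fun x => f (f x)) id).
  - by split=> [y z|y z|]; rewrite ?fD ?fM' ?f1.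
  - by split.
  - by move=> j; rewrite !fu.
  - by [].
  - by move=> j k jk; rewrite fa // fa // eq_sym.
  - by [].
have f0 := @antihom0 K f fD.
exists f; split; first split => //.
- split => //; exists f => //.
split => //.
- move=> g [gD gM g1 _] gu ga x.
  apply: (funiq g f); try done; by split.
- move=> d x; elim=> {d x}.
  + move=> j; rewrite fu; exact: homog_u.
  + move=> j k jk; rewrite fa //.
    have -> : alpha_parity j k = alpha_parity k j.
      by rewrite /alpha_parity orbC; congr (_ || _); apply: andbC.
    apply: homog_a; by rewrite eq_sym.
  + rewrite f1; exact: homog_1.
  + move=> d; rewrite f0; exact: homog_0.
  + move=> d x y _ Hx _ Hy; rewrite fD; exact: homog_add.
  + move=> d x _ Hx.
    have -> : f (- x) = - f x.
      apply/eqP; rewrite -subr_eq0 opprK -fD addNr f0 //.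
    exact: homog_opp.
  + move=> d e x y _ Hx _ Hy; rewrite fM' addbC; exact: homog_mul.
Qed.
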